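(* Let $(X,d)$ be a metric space. Then every isometric embedding $f\colon X\to X$ (a not necessarily surjective distance-preserving map) has the same coarse entropy; that is, $h_\infty(f)=h_\infty(\mathrm{id}_X)$ for every isometric embedding $f\colon X\to X$.
   Context: Let $(X,d)$ be a metric space and $f\colon X\to X$ a map. For $\delta>0$, $n\in\mathbb N$ and $x_0\in X$, a $\delta$-pseudoorbit of $f$ of length $n$ starting at $x_0$ is a sequence $(x_0,x_1,\dots,x_n)$ of points of $X$ with $d(f(x_i),x_{i+1})\le\delta$ for $i=0,\dots,n-1$. Let $P(f,n,\delta,x_0)$ be the set of all such sequences, with the distance between $(x_i)$ and $(y_i)$ given by $\max_{0\le i\le n}d(x_i,y_i)$. A set is $R$-separated if any two distinct elements are at distance at least $R$. Let $s(f,n,R,\delta,x_0)$ be the supremum of cardinalities of $R$-separated subsets of $P(f,n,\delta,x_0)$. The coarse entropy of $f$ is $h_\infty(f)=\lim_{\delta\to\infty}\lim_{R\to\infty}\limsup_{n\to\infty}\frac1n\log s(f,n,R,\delta,x_0)\in[0,\infty]$, which does not depend on $x_0$. *)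

(* Defs.v *)
From HB Require Import structures.
From mathcomp Require Import all_boot all_order all_algebra.
From mathcomp Require Import all_classical all_reals all_analysis.
Set Implicit Arguments. Unset Strict Implicit. Unset Printing Implicit Defensive.
Import Order.TTheory GRing.Theory Num.Theory.
Local Open Scope ring_scope.
Local Open Scope classical_set_scope.
Local Open Scope ereal_scope.

Definition is_metric (R : realType) (X : Type) (d : X -> X -> R) : Prop :=
  [/\ forall x y, d x y = 0%R <-> x = y,
      forall x y, d x y = d y x &
      forall x y z, (d x z <= d x y + d y z)%R].

Definition isometric_embedding (R : realType) (X : Type) (d : X -> X -> R)
  (f : X -> X) : Prop := forall x y, d (f x) (f y) = d x y.

(* A sequence (x_0,...,x_n) is a map 'I_n.+1 -> X.
   delta-pseudoorbit of f of length n starting at x0. *)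
Definition pseudoorbit (R : realType) (X : Type) (d : X -> X -> R)
  (f : X -> X) (n : nat) (delta : R) (x0 : X) (x : 'I_n.+1 -> X) : Prop :=
  x ord0 = x0 /\
  forall i : 'I_n, (d (f (x (widen_ord (leqnSn n) i))) (x (lift ord0 i)) <= delta)%R.

Definition seqdist (R : realType) (X : Type) (d : X -> X -> R) (n : nat)
  (x y : 'I_n.+1 -> X) : R :=
  (\big[Num.max/0%R]_(i < n.+1) d (x i) (y i))%R.

(* A subset of cardinality k is given
   by an injective enumeration g : 'I_k -> P(f,n,delta,x0). *)
Definition sep_count (R : realType) (X : Type) (d : X -> X -> R)
  (f : X -> X) (n : nat) (r delta : R) (x0 : X) : \bar R :=
  ereal_sup [set (k%:R)%:E | k in
    [set k : nat | exists g : 'I_k -> ('I_n.+1 -> X),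
       injective g /\
       (forall j, pseudoorbit d f delta x0 (g j)) /\
       (forall j j', j <> j' -> (r <= seqdist d (g j) (g j'))%R)]].

Definition elog (R : realType) (x : \bar R) : \bar R :=
  match x with
  | r%:E => (ln r)%:E
  | +oo => +oo
  | -oo => -oo
  end.

Definition coarse_entropy (R : realType) (X : Type) (d : X -> X -> R)
  (f : X -> X) (x0 : X) : \bar R :=
  lim ((fun delta : R =>
          lim ((fun r : R =>
                  limn_esup (fun n : nat =>
                     ((n%:R)^-1)%:E * elog (sep_count d f n r delta x0)))
               r @[r --> +oo%R]))
       delta @[delta --> +oo%R]).

(* Main.v *)
Require Import Defs.
From HB Require Import structures.
From mathcomp Require Import all_boot all_order all_algebra.
From mathcomp Require Import all_classical all_reals all_analysis.
From mathcomp Require Import zify ring lra.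
Set Implicit Arguments. Unset Strict Implicit. Unset Printing Implicit Defensive.
Import Order.TTheory GRing.Theory Num.Theory.
Local Open Scope ring_scope.
Local Open Scope classical_set_scope.

Lemma dxx (R : realType) (X : Type) (d : X -> X -> R) (hd : is_metric d) x :
  d x x = 0.
Proof. by case: hd => h _ _; exact: (proj2 (h x x) erefl). Qed.

Lemma dsym (R : realType) (X : Type) (d : X -> X -> R) (hd : is_metric d) x y :
  d x y = d y x.
Proof. by case: hd. Qed.

Lemma dtri (R : realType) (X : Type) (d : X -> X -> R) (hd : is_metric d) x y z :
  d x z <= d x y + d y z.
Proof. by case: hd. Qed.

Lemma dge0 (R : realType) (X : Type) (d : X -> X -> R) (hd : is_metric d) x y :
  0 <= d x y.
Proof.
have := dtri hd x y x; rewrite dxx // (dsym hd y x) => h; lra.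
Qed.

Lemma d0eq (R : realType) (X : Type) (d : X -> X -> R) (hd : is_metric d) x y :
  d x y = 0 -> x = y.
Proof. by case: hd => h _ _; exact: (proj1 (h x y)). Qed.

Lemma iter_iso (R : realType) (X : Type) (d : X -> X -> R) f
  (hf : isometric_embedding d f) k a b : d (iter k f a) (iter k f b) = d a b.
Proof. by elim: k => //= k IH; rewrite hf IH. Qed.

Lemma seqdist_ge (R : realType) (X : Type) (d : X -> X -> R) n
  (x y : 'I_n.+1 -> X) (i : 'I_n.+1) : d (x i) (y i) <= seqdist d x y.
Proof. by rewrite /seqdist (bigD1 i) //= le_max lexx. Qed.

Lemma seqdist_att (R : realType) (X : Type) (d : X -> X -> R) n
  (x y : 'I_n.+1 -> X) r : 0 < r -> r <= seqdist d x y ->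
  exists i : 'I_n.+1, r <= d (x i) (y i).
Proof.
move=> r0 hr; case: (pselect (exists i : 'I_n.+1, r <= d (x i) (y i))) => // H.
exfalso; move: hr; apply/negP; rewrite -ltNge /seqdist.
apply: (big_ind (fun v => v < r)) => //.
  by move=> a b ha hb; rewrite gt_max ha hb.
move=> i _; rewrite ltNge; apply/negP => h; apply: H; by exists i.
Qed.

Lemma seqdist_eq0 (R : realType) (X : Type) (d : X -> X -> R) (hd : is_metric d) n
  (x : 'I_n.+1 -> X) : seqdist d x x = 0.
Proof. rewrite /seqdist; apply: (big_ind (fun v => v = 0)) => //; [by move=> a b -> ->; rewrite maxxx|by move=> i _; rewrite dxx]. Qed.

Definition goodk (R : realType) (X : Type) (d : X -> X -> R)
  (f : X -> X) (n : nat) (r delta : R) (x0 : X) (k : nat) : Prop :=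
  exists g : 'I_k -> ('I_n.+1 -> X),
       injective g /\
       (forall j, pseudoorbit d f delta x0 (g j)) /\
       (forall j j', j <> j' -> (r <= seqdist d (g j) (g j'))%R).

Lemma sep_countE (R : realType) (X : Type) (d : X -> X -> R)
  (f : X -> X) (n : nat) (r delta : R) (x0 : X) :
  sep_count d f n r delta x0 = ereal_sup [set (k%:R)%:E | k in goodk d f n r delta x0].
Proof. by []. Qed.

Lemma sep_le (R : realType) (X : Type) (d : X -> X -> R) f1 f2 n1 n2 r1 r2 de1 de2 x0 :
  (forall k, goodk d f1 n1 r1 de1 x0 k -> goodk d f2 n2 r2 de2 x0 k) ->
  (sep_count d f1 n1 r1 de1 x0 <= sep_count d f2 n2 r2 de2 x0)%E.
Proof.
move=> H; rewrite !sep_countE; apply: ereal_sup_le => _ [k hk <-].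
by exists k => //; apply: H.
Qed.

Lemma good0 (R : realType) (X : Type) (d : X -> X -> R) f n r de x0 :
  goodk d f n r de x0 0.
Proof.
exists (fun _ _ => x0); split; first by move=> [].
by split; move=> [].
Qed.

Lemma sep_cases (R : realType) (X : Type) (d : X -> X -> R) f n r de x0 :
  let s := sep_count d f n r de x0 in s = 0%E \/ (1 <= s)%E.
Proof.
move=> s.
have s0 : (0 <= s)%E.
  by apply: ereal_sup_ubound; exists 0%N => //; apply: good0.
have [->|sn0] := eqVneq s 0%E; first by left.
right; have : (0 < s)%E by rewrite lt_neqAle eq_sym sn0 s0.
move=> /ereal_sup_gt [_ [k hk <-]]; rewrite lte_fin => k0.
apply: le_trans (ereal_sup_ubound _); last by exists k.
rewrite lee_fin; move: k0; rewrite ltr0n => k0.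
by rewrite (_ : 1 = 1%:R) // ler_nat.
Qed.

Lemma good_mono_r (R : realType) (X : Type) (d : X -> X -> R) f n r1 r2 de x0 k :
  r1 <= r2 -> goodk d f n r2 de x0 k -> goodk d f n r1 de x0 k.
Proof.
move=> hr [g [gi [gp gs]]]; exists g; split => //; split => // j j' h.
exact: le_trans hr (gs _ _ h).
Qed.

Lemma good_mono_de (R : realType) (X : Type) (d : X -> X -> R) f n r de1 de2 x0 k :
  de1 <= de2 -> goodk d f n r de1 x0 k -> goodk d f n r de2 x0 k.
Proof.
move=> hr [g [gi [gp gs]]]; exists g; split => //; split => // j.
have [h0 hs] := gp j; split => // i; exact: le_trans (hs i) hr.
Qed.

Lemma goodA (R : realType) (X : Type) (d : X -> X -> R) (hd : is_metric d) f
  (hf : isometric_embedding d f) n r de x0 k :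
  goodk d id n r de x0 k -> goodk d f n r de x0 k.
Proof.
move=> [g [gi [gp gs]]].
pose h j := fun i : 'I_n.+1 => iter i f (g j i).
have hdist j j' : seqdist d (h j) (h j') = seqdist d (g j) (g j').
  by rewrite /seqdist; apply: eq_bigr => i _; rewrite /h iter_iso.
exists h; split; [|split].
- move=> j j' e; apply: gi; apply/funext => i.
  have := congr1 (fun u => u i) e; rewrite /h => e'.
  apply: (d0eq hd); rewrite -(iter_iso hf i) e' dxx //.
- move=> j; have [h0 hs] := gp j; split; first by rewrite /h /= h0.
  move=> i; have := hs i; rewrite /h -iterS.
  have -> : (widen_ord (leqnSn n) i).+1 = lift ord0 i by rewrite lift0.
  by rewrite iter_iso.
- by move=> j j' hj; rewrite hdist; apply: gs.
Qed.

Definition xs (X : Type) n (x : 'I_n.+1 -> X) (t : nat) : X := x (inord t).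

Definition Phin (X : Type) (f : X -> X) (x0 : X) n (x : 'I_n.+1 -> X) (i : nat) : X :=
  let m := (n %/ 2)%N in
  if (i < m)%N then iter (2 * i) f x0
  else iter (2 * m - 2 * minn (i - m) m) f (xs x (2 * minn (i - m) m)).

Lemma pstep (R : realType) (X : Type) (d : X -> X -> R) f de x0 n (x : 'I_n.+1 -> X) t :
  pseudoorbit d f de x0 x -> (t < n)%N -> d (f (xs x t)) (xs x t.+1) <= de.
Proof.
move=> [_ hs] tn; have := hs (Ordinal tn); rewrite /xs.
have -> : widen_ord (leqnSn n) (Ordinal tn) = inord t.
  by apply/val_inj; rewrite /= inordK // ltnS ltnW.
have -> : lift ord0 (Ordinal tn) = inord t.+1.
  by apply/val_inj; rewrite /= /bump /= inordK.
by [].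
Qed.

Lemma xs0 (R : realType) (X : Type) (d : X -> X -> R) f de x0 n (x : 'I_n.+1 -> X) :
  pseudoorbit d f de x0 x -> xs x 0 = x0.
Proof.
move=> [h0 _]; rewrite /xs -h0; congr x; by apply/val_inj; rewrite /= inordK.
Qed.

Lemma seqdist_ge_xs (R : realType) (X : Type) (d : X -> X -> R) n
  (x y : 'I_n.+1 -> X) t : (t <= n)%N -> d (xs x t) (xs y t) <= seqdist d x y.
Proof. by move=> tn; apply: seqdist_ge. Qed.

Lemma goodB (R : realType) (X : Type) (d : X -> X -> R) (hd : is_metric d) f
  (hf : isometric_embedding d f) n r de x0 k :
  d x0 (f x0) <= de -> 2 * de < r ->
  goodk d f n r de x0 k -> goodk d id n (r - 2 * de) (2 * de) x0 k.
Proof.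
move=> hc hr [g [gi [gp gs]]].
have de0 : 0 <= de by apply: le_trans hc; apply: dge0.
set m := (n %/ 2)%N.
have mn : (2 * m <= n)%N by rewrite /m; lia.
pose h j := fun i : 'I_n.+1 => Phin f x0 (g j) i.
have PhiS (x : 'I_n.+1 -> X) j : (j <= m)%N -> Phin f x0 x (m + j) = iter (2 * m - 2 * j) f (xs x (2 * j)).
  move=> jm; rewrite /Phin -/m ifF; last by apply/negbTE; rewrite -leqNgt; lia.
  by rewrite addKn (minn_idPl jm).
have sepP j j' : j <> j' -> r - 2 * de <= seqdist d (h j) (h j').
  move=> jj.
  have r0 : 0 < r by apply: le_lt_trans hr; rewrite mulr_ge0.
  have [i hi] := seqdist_att r0 (gs _ _ jj).
  set t := nat_of_ord i.
  have ti : i = inord t by rewrite inord_val.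
  have tn : (t <= n)%N by have := ltn_ord i; rewrite ltnS.
  set u := (t %/ 2)%N.
  have um : (u <= m)%N by rewrite /u /m; lia.
  have key : r - 2 * de <= d (xs (g j) (2 * u)) (xs (g j') (2 * u)).
    have [ht|ht] : (t = 2 * u)%N \/ (t = (2 * u).+1)%N by rewrite /u; lia.
    - rewrite -ht /xs -ti; apply: le_trans hi; lra.
    - have s1 := pstep (gp j) (_ : (2 * u < n)%N).
      have s2 := pstep (gp j') (_ : (2 * u < n)%N).
      have e1 := s1 ltac:(lia). have e2 := s2 ltac:(lia).
      rewrite -ht in e1 e2.
      have t1 := dtri hd (xs (g j) t) (f (xs (g j) (2 * u))) (xs (g j') t).
      have t2 := dtri hd (f (xs (g j) (2 * u))) (f (xs (g j') (2 * u))) (xs (g j') t).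
      rewrite hf in t2.
      rewrite (dsym hd (xs (g j) t) (f (xs (g j) (2 * u)))) in t1.
      have hi' : r <= d (xs (g j) t) (xs (g j') t) by rewrite /xs -ti.
      lra.
  apply: le_trans key _.
  have := seqdist_ge d (h j) (h j') (inord (m + u)).
  rewrite /h inordK; last by rewrite ltnS; lia.
  by rewrite !PhiS // iter_iso.
have pre p : d (iter p f x0) (iter p.+2 f x0) <= 2 * de.
  rewrite iterSr iterSr iter_iso //.
  have := dtri hd x0 (f x0) (f (f x0)); rewrite hf; lra.
have stepP (x : 'I_n.+1 -> X) : pseudoorbit d f de x0 x -> forall i, (i < n)%N ->
    d (Phin f x0 x i) (Phin f x0 x i.+1) <= 2 * de.
  move=> px i lt.
  case: (ltnP i.+1 m) => h1.
    have h0 : (i < m)%N by lia.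
    rewrite /Phin -/m h0 h1.
    have -> : (2 * i.+1 = (2 * i).+2)%N by lia.
    exact: pre.
  case: (ltnP i m) => h0.
    rewrite /Phin -/m h0 ifF; last by apply/negbTE; rewrite -leqNgt.
    have -> : (i.+1 - m = 0)%N by lia.
    rewrite min0n muln0 subn0 (xs0 px).
    have -> : (2 * m = (2 * i).+2)%N by lia.
    exact: pre.
  rewrite /Phin -/m !ifF; last 2 first.
    by apply/negbTE; rewrite -leqNgt.
    by apply/negbTE; rewrite -leqNgt; lia.
  case: (ltnP (i - m) m) => h2.
    have e1 : minn (i - m) m = (i - m)%N by lia.
    have e2 : minn (i.+1 - m) m = (i - m).+1 by lia.
    rewrite ?e1 ?e2; set j := (i - m)%N.
    have -> : (2 * m - 2 * j = (2 * m - 2 * j.+1).+2)%N by lia.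
    rewrite iterSr iterSr iter_iso //.
    have -> : (2 * j.+1 = (2 * j).+2)%N by lia.
    have a1 := pstep px (_ : (2 * j < n)%N).
    have a2 := pstep px (_ : ((2 * j).+1 < n)%N).
    have b1 := a1 ltac:(lia). have b2 := a2 ltac:(lia).
    have := dtri hd (f (f (xs x (2 * j)))) (f (xs x (2 * j).+1)) (xs x (2 * j).+2).
    rewrite hf; lra.
  have e1 : minn (i - m) m = m by lia.
  have e2 : minn (i.+1 - m) m = m by lia.
  by rewrite ?e1 ?e2 dxx // mulr_ge0.
exists h; split; [|split].
- move=> j j' e; case: (pselect (j = j')) => // jj.
  have := sepP _ _ jj; rewrite e seqdist_eq0 // => H; exfalso; lra.
- move=> j; split.
    rewrite /h /Phin -/m /=; case: ifP => // H.
    have m0 : m = 0%N by move/negbT: H; rewrite -leqNgt leqn0 => /eqP.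
    rewrite m0 /=.
    by rewrite /= (xs0 (gp j)).
  move=> i; rewrite /h /= /bump leq0n add1n; apply: stepP => //.
- move=> j j' jj; exact: (sepP j j' jj).
Qed.
Local Open Scope ereal_scope.

Definition G (R : realType) (X : Type) (d : X -> X -> R) (f : X -> X) (x0 : X)
  (delta r : R) : \bar R :=
  limn_esup (fun n : nat =>
                     ((n%:R)^-1)%:E * elog (sep_count d f n r delta x0)).

Lemma elog_le (R : realType) (a b : \bar R) : a <= b ->
  (a = 0 \/ 1 <= a) -> (b = 0 \/ 1 <= b) -> elog a <= elog b.
Proof.
move=> ab [->|a1] hb.
  rewrite /= ln0 //; case: hb => [->|]; first by rewrite /= ln0.
  case: b ab => [s| |] _ /=.
  - by rewrite !lee_fin => s1; apply: ln_ge0.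
  - by move=> _; rewrite leey.
  - by rewrite leeNy_eq.
case: hb => [b0|b1].
  by move: (le_trans a1 ab); rewrite b0 lee_fin ler10.
case: a ab a1 => [s| |]; case: b b1 => [t| |] //=.
- rewrite !lee_fin => t1 st s1; rewrite ler_ln // posrE; lra.
- by move=> *; rewrite leey.
Qed.

Lemma limn_esup_le (R : realType) (u v : (\bar R)^nat) :
  (forall n, u n <= v n) -> limn_esup u <= limn_esup v.
Proof.
move=> uv; rewrite /limn_esup /limf_esup.
apply: le_ereal_inf_tmp => _ [V hV <-].
apply: le_trans (ereal_inf_lbound _) _; first by exists V.
apply: ge_ereal_sup => _ [n hn <-].
apply: le_trans (uv n) _; apply: ereal_sup_ubound; by exists n.
Qed.

Lemma G_le (R : realType) (X : Type) (d : X -> X -> R) f1 f2 x0 de1 de2 r1 r2 :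
  (forall n k, goodk d f1 n r1 de1 x0 k -> goodk d f2 n r2 de2 x0 k) ->
  G d f1 x0 de1 r1 <= G d f2 x0 de2 r2.
Proof.
move=> H; apply: limn_esup_le => n; apply: lee_wpmul2l.
  by rewrite lee_fin invr_ge0.
apply: elog_le; [exact: sep_le (H n)|exact: sep_cases|exact: sep_cases].
Qed.

Lemma G_anti_r (R : realType) (X : Type) (d : X -> X -> R) f x0 de (r1 r2 : R) :
  (r1 <= r2)%R -> G d f x0 de r2 <= G d f x0 de r1.
Proof. by move=> h; apply: G_le => n k; apply: good_mono_r. Qed.

Lemma G_mono_de (R : realType) (X : Type) (d : X -> X -> R) f x0 (de1 de2 : R) r :
  (de1 <= de2)%R -> G d f x0 de1 r <= G d f x0 de2 r.
Proof. by move=> h; apply: G_le => n k; apply: good_mono_de. Qed.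

Lemma ceE (R : realType) (X : Type) (d : X -> X -> R) f x0 :
  coarse_entropy d f x0 = ereal_sup (range (fun de => ereal_inf (range (G d f x0 de)))).
Proof.
have inner de : lim (G d f x0 de r @[r --> +oo%R]) = ereal_inf (range (G d f x0 de)).
  apply/cvg_lim => //; apply: nonincreasing_cvge => a b ab; exact: G_anti_r.
rewrite /coarse_entropy.
have -> : (fun delta : R =>
          lim ((fun r : R =>
                  limn_esup (fun n : nat =>
                     ((n%:R)^-1)%:E * elog (sep_count d f n r delta x0)))
               r @[r --> +oo%R])) = fun de => ereal_inf (range (G d f x0 de)).
  by apply/funext => de; rewrite -inner.
apply/cvg_lim => //; apply: nondecreasing_cvge => a b ab.
apply: le_ereal_inf_tmp => _ [r _ <-].
apply: (@le_trans _ _ (G d f x0 a r)); [by apply: ereal_inf_lbound; exists r|exact: G_mono_de].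
Qed.

Local Close Scope ereal_scope.

Theorem mainTheorem1 (R : realType) (X : Type) (d : X -> X -> R)
  (hd : is_metric d) (f : X -> X) (hf : isometric_embedding d f) (x0 : X) :
  coarse_entropy d f x0 = coarse_entropy d id x0.
Proof.
rewrite !ceE; apply/eqP; rewrite eq_le; apply/andP; split.
- apply: ge_ereal_sup => _ [de _ <-].
  set c := d x0 (f x0).
  set de' := Num.max de c.
  apply: (@le_trans _ _ (ereal_inf (range (G d id x0 (2 * de'))))); last first.
    by apply: ereal_sup_ubound; exists (2 * de').
  apply: (@le_trans _ _ (ereal_inf (range (G d f x0 de')))).
    apply: le_ereal_inf_tmp => _ [r _ <-].
    apply: (@le_trans _ _ (G d f x0 de r)).
      by apply: ereal_inf_lbound; exists r.
    by apply: G_mono_de; rewrite le_max lexx.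
  apply: le_ereal_inf_tmp => _ [r _ <-].
  set r' := Num.max r 0 + 2 * de' + 1.
  apply: (@le_trans _ _ (G d f x0 de' r')).
    by apply: ereal_inf_lbound; exists r'.
  have hc : c <= de' by rewrite le_max lexx orbT.
  have h0 : (0 <= Num.max r 0)%R by rewrite le_max lexx orbT.
  have r'1 : 2 * de' < r' by rewrite /r'; lra.
  apply: (@le_trans _ _ (G d id x0 (2 * de') (r' - 2 * de'))).
    by apply: G_le => n k; apply: goodB.
  have h1 : (r <= Num.max r 0)%R by rewrite le_max lexx.
  apply: G_anti_r; rewrite /r'; lra.
- apply: ge_ereal_sup => _ [de _ <-].
  apply: (@le_trans _ _ (ereal_inf (range (G d f x0 de)))); last first.
    by apply: ereal_sup_ubound; exists de.
  apply: le_ereal_inf_tmp => _ [r _ <-].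
  apply: (@le_trans _ _ (G d id x0 de r)).
    by apply: ereal_inf_lbound; exists r.
  by apply: G_le => n k; apply: goodA.
Qed.
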